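(* Let $\tilde G$ be the infinite heavy-hexagonal graph and let $G$ be a finite subgraph of $\tilde G$. Let $L(G)$ be the interference graph of $G$. If $G$ contains two connected unit cells as a subgraph, then the chromatic number of $L(G)$ equals $6$, i.e. $\chi(L(G))=6$.
   Context: The infinite heavy-hexagonal graph $\tilde G$ is obtained from the infinite hexagonal (honeycomb) lattice by inserting one additional vertex into every edge (subdividing each edge once). A unit cell is the 12-vertex cycle of $\tilde G$ arising from a single hexagonal face of the honeycomb lattice; two unit cells are connected if their hexagons are adjacent (share a side). For a graph $G=(V,E)$ and an edge $e=\{i,j\}\in E$, let $N(e)=(N(i)\setminus\{j\})\cup(N(j)\setminus\{i\})$ be its neighborhood, where $N(v)$ is the set of neighbors of vertex $v$. The interference graph $L(G)$ has one vertex for each edge of $G$, and two distinct edges $e,f$ of $G$ are adjacent in $L(G)$ if they interfere, i.e. if $(e\cup N(e))\cap(f\cup N(f))\neq\emptyset$ (the qubits used by a parallel experiment on $e$, namely its endpoints and its neighboring qubits, overlap with those used for $f$). The chromatic number $\chi$ is the minimum number of colors in a proper vertex coloring. *)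

(* Defs.v *)
From HB Require Import structures.
From mathcomp Require Import all_boot all_order all_algebra.
From mathcomp Require Import finmap.
Set Implicit Arguments. Unset Strict Implicit. Unset Printing Implicit Defensive.
Import Order.TTheory GRing.Theory Num.Theory.
Local Open Scope fset_scope.
Local Open Scope ring_scope.

(* The honeycomb lattice is modelled as the "brick wall": vertices      *)
(* (x,y) in Z^2, horizontal edges (x,y)-(x+1,y) for all x,y, vertical    *)
(* edges (x,y)-(x,y+1) iff x+y is even.  Subdividing every edge once,    *)
(* we use doubled coordinates: honeycomb vertex (x,y) becomes (2x,2y),   *)
(* the midpoint of (x,y)-(x+1,y) is (2x+1,2y) and the midpoint of        *)
(* (x,y)-(x,y+1) (x+y even) is (2x,2y+1).                               *)

Definition vtx := (int * int)%type.

Definition hh_vertex (p : vtx) : Prop :=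
  (exists x y : int, p = (2 * x, 2 * y)) \/
  (exists x y : int, p = (2 * x + 1, 2 * y)) \/
  (exists x y k : int, p = (2 * x, 2 * y + 1) /\ x + y = 2 * k).

(* Edges of the heavy-hex graph: two heavy-hex vertices at lattice
   (L1) distance 1; these are exactly the subdivided honeycomb edges. *)
Definition hh_adj (p q : vtx) : Prop :=
  hh_vertex p /\ hh_vertex q /\ `|p.1 - q.1| + `|p.2 - q.2| = 1.

Definition finite_subgraph (V : {fset vtx}) (E : {fset {fset vtx}}) : Prop :=
  (forall v, v \in V -> hh_vertex v) /\
  (forall e, e \in E ->
     exists i j, e = [fset i; j] /\ i \in V /\ j \in V /\ hh_adj i j).

Definition nbr (V : {fset vtx}) (E : {fset {fset vtx}}) (v : vtx) : {fset vtx} :=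
  [fset u in V | [fset u; v] \in E].

Definition edge_nbr (V : {fset vtx}) (E : {fset {fset vtx}}) (i j : vtx) : {fset vtx} :=
  ((nbr V E i `\ j) `|` (nbr V E j `\ i))%fset.

Definition interfere (V : {fset vtx}) (E : {fset {fset vtx}}) (e f : {fset vtx}) : Prop :=
  exists i j k l, e = [fset i; j] /\ f = [fset k; l] /\
    (([fset i; j] `|` edge_nbr V E i j) `&` ([fset k; l] `|` edge_nbr V E k l))%fset != fset0.

Definition colorable (T : choiceType) (W : {fset T}) (R : T -> T -> Prop) (k : nat) : Prop :=
  exists c : T -> nat,
    (forall x, x \in W -> (c x < k)%N) /\
    (forall x y, x \in W -> y \in W -> x <> y -> R x y -> c x <> c y).

Definition chromatic_number (T : choiceType) (W : {fset T}) (R : T -> T -> Prop) (n : nat) : Prop :=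
  colorable W R n /\ (forall k, colorable W R k -> (n <= k)%N).

(* Unit cell attached to the brick (honeycomb face) with lower-left corner
   (x,y), x+y even: its 12-cycle is the boundary of the doubled-coordinate
   rectangle [2x,2x+4] x [2y,2y+2]. *)
Definition is_face (x y : int) : Prop := exists k : int, x + y = 2 * k.

Definition cell_vertex (x y : int) (p : vtx) : Prop :=
  2 * x <= p.1 <= 2 * x + 4 /\ 2 * y <= p.2 <= 2 * y + 2 /\
  (p.1 = 2 * x \/ p.1 = 2 * x + 4 \/ p.2 = 2 * y \/ p.2 = 2 * y + 2).

Definition cell_edge (x y : int) (e : {fset vtx}) : Prop :=
  exists p q, e = [fset p; q] /\ cell_vertex x y p /\ cell_vertex x y q /\
    `|p.1 - q.1| + `|p.2 - q.2| = 1.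

Definition contains_cell (E : {fset {fset vtx}}) (x y : int) : Prop :=
  forall e, cell_edge x y e -> e \in E.

(* G contains two connected unit cells: two distinct faces whose
   hexagons share a side (equivalently, whose 12-cycles share an edge). *)
Definition contains_two_connected_cells (E : {fset {fset vtx}}) : Prop :=
  exists x y x' y' : int,
    is_face x y /\ is_face x' y' /\ (x, y) <> (x', y') /\
    (exists e, cell_edge x y e /\ cell_edge x' y' e) /\
    contains_cell E x y /\ contains_cell E x' y'.

(* Main.v *)
Require Import Defs.
From HB Require Import structures.
From mathcomp Require Import all_boot all_order all_algebra.
From mathcomp Require Import finmap.
From mathcomp Require Import zify.
Set Implicit Arguments. Unset Strict Implicit. Unset Printing Implicit Defensive.
Import Order.TTheory GRing.Theory Num.Theory.
Local Open Scope fset_scope.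
Local Open Scope ring_scope.


Definition hedge (X Y d1 d2 : int) : Prop :=
  (d1 = 1 /\ d2 = 0) \/ (d1 = -1 /\ d2 = 0) \/
  (d1 = 0 /\ d2 = 1 /\ ((X + Y) %% 2)%Z = 0) \/
  (d1 = 0 /\ d2 = -1 /\ ((X + Y) %% 2)%Z = 1).

Lemma hvP (p : vtx) : hh_vertex p ->
  (exists a b : int, p.1 = 2 * a /\ p.2 = 2 * b) \/
  (exists a b : int, p.1 = 2 * a + 1 /\ p.2 = 2 * b) \/
  (exists a b : int, p.1 = 2 * a /\ p.2 = 2 * b + 1 /\ ((a + b) %% 2)%Z = 0).
Proof.
case=> [[a [b ->]]|[[a [b ->]]|[a [b [k [-> h]]]]]].
- by left; exists a, b.
- by right; left; exists a, b.
- right; right; exists a, b; split => //; split => //; lia.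
Qed.

Lemma cls (i j : vtx) : hh_adj i j ->
  exists X Y d1 d2, hedge X Y d1 d2 /\
   ((i.1 = 2 * X /\ i.2 = 2 * Y /\ j.1 = 2 * X + d1 /\ j.2 = 2 * Y + d2) \/
    (j.1 = 2 * X /\ j.2 = 2 * Y /\ i.1 = 2 * X + d1 /\ i.2 = 2 * Y + d2)).
Proof.
case=> hi [hj hd]; rewrite /hedge.
case: (hvP hi) => [[a [b [h1 h2]]]|hi'].
  exists a, b, (j.1 - 2 * a), (j.2 - 2 * b).
  case: (hvP hj) => [[a' [b' [h1' h2']]]|[[a' [b' [h1' h2']]]|[a' [b' [h1' [h2' h3']]]]]]; lia.
case: (hvP hj) => [[a [b [h1 h2]]]|hj'].
  exists a, b, (i.1 - 2 * a), (i.2 - 2 * b).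
  case: hi' => [[a' [b' [h1' h2']]]|[a' [b' [h1' [h2' h3']]]]]; lia.
exfalso.
case: hi' => [[a' [b' [h1' h2']]]|[a' [b' [h1' [h2' h3']]]]];
case: hj' => [[a [b [h1 h2]]]|[a [b [h1 [h2 h3]]]]]; lia.
Qed.

Definition colS (s1 s2 : int) : nat :=
  let X := ((s1 + 1) %/ 4)%Z in let Y := ((s2 + 1) %/ 4)%Z in
  (3 * (if ((X + Y) %% 2)%Z == 0%R then 0 else 1) +
   (if (s1 %% 4)%Z == 1%R then 0 else if (s1 %% 4)%Z == 3%R then 1 else 2))%N.

Lemma colS_lt s1 s2 : (colS s1 s2 < 6)%N.
Proof. by rewrite /colS; repeat case: ifP. Qed.

Lemma colS_eq X Y d1 d2 : hedge X Y d1 d2 ->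
  colS (4 * X + d1) (4 * Y + d2) =
  (3 * (if ((X + Y) %% 2)%Z == 0%R then 0 else 1) +
   (if d1 == 1%R then 0 else if d1 == (-1)%R then 1 else 2))%N.
Proof.
move=> h; rewrite /colS.
have -> : ((4 * X + d1 + 1) %/ 4)%Z = X by rewrite /hedge in h; lia.
have -> : ((4 * Y + d2 + 1) %/ 4)%Z = Y by rewrite /hedge in h; lia.
case: h => [[-> _]|[[-> _]|[[-> [_ _]]|[-> [_ _]]]]].
- by have -> : ((4 * X + 1) %% 4)%Z = 1 by lia.
- by have -> : ((4 * X + -1) %% 4)%Z = 3 by lia.
- by have -> : ((4 * X + 0) %% 4)%Z = 0 by lia.
- by have -> : ((4 * X + 0) %% 4)%Z = 0 by lia.
Qed.

Lemma key (X1 Y1 d1 d2 X2 Y2 e1 e2 a1 a2 b1 b2 w1 w2 : int) :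
 hedge X1 Y1 d1 d2 -> hedge X2 Y2 e1 e2 ->
 colS (4 * X1 + d1) (4 * Y1 + d2) = colS (4 * X2 + e1) (4 * Y2 + e2) ->
 ((a1 = 2 * X1 /\ a2 = 2 * Y1) \/ (a1 = 2 * X1 + d1 /\ a2 = 2 * Y1 + d2)) ->
 ((b1 = 2 * X2 /\ b2 = 2 * Y2) \/ (b1 = 2 * X2 + e1 /\ b2 = 2 * Y2 + e2)) ->
 `|a1 - w1| + `|a2 - w2| <= 1 -> `|b1 - w1| + `|b2 - w2| <= 1 ->
 X1 = X2 /\ Y1 = Y2 /\ d1 = e1 /\ d2 = e2.
Proof.
move=> h1 h2; rewrite (colS_eq h1) (colS_eq h2).
have P1 : ((X1 + Y1) %% 2)%Z = 0 \/ ((X1 + Y1) %% 2)%Z = 1 by lia.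
have P2 : ((X2 + Y2) %% 2)%Z = 0 \/ ((X2 + Y2) %% 2)%Z = 1 by lia.
case: h1 => [[-> ->]|[[-> ->]|[[-> [-> H1]]|[-> [-> H1]]]]];
case: h2 => [[-> ->]|[[-> ->]|[[-> [-> H2]]|[-> [-> H2]]]]];
case: P1 => P1; case: P2 => P2; rewrite ?P1 ?P2 /=; try discriminate; lia.
Qed.


Lemma pair_ext (p q : vtx) : p.1 = q.1 -> p.2 = q.2 -> p = q.
Proof. by case: p; case: q => /= ? ? ? ? -> ->. Qed.

Lemma sum2 (F : vtx -> int) (i j : vtx) : i != j ->
  \sum_(p <- [fset i; j]) F p = F i + F j.
Proof.
move=> nij.
have pe : perm_eq [fset i; j] [:: i; j].
  apply: uniq_perm; first exact: fset_uniq.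
    by rewrite /= inE andbT.
  by move=> x; rewrite !inE.
by rewrite (perm_big _ pe) /= !big_cons big_nil addr0.
Qed.

Definition col (e : {fset vtx}) : nat :=
  colS (\sum_(p <- e) p.1) (\sum_(p <- e) p.2).

Lemma near_of V E i j w : finite_subgraph V E ->
  w \in ([fset i; j] `|` edge_nbr V E i j) ->
  exists a, a \in [fset i; j] /\ `|a.1 - w.1| + `|a.2 - w.2| <= 1.
Proof.
move=> [_ hE] /fsetUP [hw|].
  exists w; split => //; lia.
have gen : forall x : vtx, w \in nbr V E x -> x \in [fset i; j] ->
    exists a, a \in [fset i; j] /\ `|a.1 - w.1| + `|a.2 - w.2| <= 1.
  move=> x; rewrite /nbr !inE => /andP [_ hx] xin.
  exists x; split; first by rewrite !inE.
  case: (hE _ hx) => [a [b [eq [_ [_ [_ [_ hd]]]]]]].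
  have := congr1 (fun A => w \in A) eq; have := congr1 (fun A => x \in A) eq.
  rewrite !inE !eqxx /= orbT => /esym /orP [] /eqP Hx /esym /orP [] /eqP Hw; subst; lia.
rewrite /edge_nbr => /fsetUP [] /fsetDP [hn _].
  by apply: (gen i hn); rewrite !inE eqxx.
by apply: (gen j hn); rewrite !inE eqxx orbT.
Qed.

Definition orient (i j : vtx) (X Y d1 d2 : int) :=
  (i.1 = 2 * X /\ i.2 = 2 * Y /\ j.1 = 2 * X + d1 /\ j.2 = 2 * Y + d2) \/
  (j.1 = 2 * X /\ j.2 = 2 * Y /\ i.1 = 2 * X + d1 /\ i.2 = 2 * Y + d2).

Lemma orient_sum (i j : vtx) X Y d1 d2 : orient i j X Y d1 d2 ->
  i.1 + j.1 = 4 * X + d1 /\ i.2 + j.2 = 4 * Y + d2.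
Proof. rewrite /orient; lia. Qed.

Lemma same_edge (i j k l : vtx) X Y d1 d2 :
  orient i j X Y d1 d2 -> orient k l X Y d1 d2 -> [fset i; j] = [fset k; l].
Proof.
case=> o1; case=> o2.
- have -> : i = k by apply: pair_ext; lia.
  by have -> : j = l by apply: pair_ext; lia.
- rewrite fsetUC; have -> : i = l by apply: pair_ext; lia.
  by have -> : j = k by apply: pair_ext; lia.
- rewrite fsetUC; have -> : i = l by apply: pair_ext; lia.
  by have -> : j = k by apply: pair_ext; lia.
- have -> : i = k by apply: pair_ext; lia.
  by have -> : j = l by apply: pair_ext; lia.
Qed.

Lemma edge_data V E e : finite_subgraph V E -> e \in E ->
  exists i j X Y d1 d2, e = [fset i; j] /\ hedge X Y d1 d2 /\
   ((i.1 = 2 * X /\ i.2 = 2 * Y /\ j.1 = 2 * X + d1 /\ j.2 = 2 * Y + d2) \/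
    (j.1 = 2 * X /\ j.2 = 2 * Y /\ i.1 = 2 * X + d1 /\ i.2 = 2 * Y + d2)) /\
   col e = colS (4 * X + d1) (4 * Y + d2).
Proof.
move=> [_ hE] he; case: (hE _ he) => [i [j [-> [_ [_ hij]]]]].
have hd := hij; case: hd => _ [_ hd].
case: (cls hij) => [X [Y [d1 [d2 [hh ho]]]]].
exists i, j, X, Y, d1, d2; split => //; split => //; split => //.
have nij : i != j by apply/eqP => eij; rewrite eij in hd; lia.
have [s1 s2] := orient_sum ho.
by rewrite /col !sum2 // s1 s2.
Qed.

Lemma upper V E : finite_subgraph V E -> colorable E (interfere V E) 6.
Proof.
move=> hG; exists col; split; first by move=> x _; exact: colS_lt.
move=> e f he hf nef [i [j [k [l [ei [fk hI]]]]]] ce.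
case/fset0Pn: hI => w /fsetIP [hw1 hw2].
case: (near_of hG hw1) => a [ain ha].
case: (near_of hG hw2) => b [bin hb].
rewrite -ei in ain; rewrite -fk in bin.
case: (edge_data hG he) => [i1 [j1 [X1 [Y1 [d1 [d2 [e1 [h1 [o1 c1]]]]]]]]].
case: (edge_data hG hf) => [k1 [l1 [X2 [Y2 [g1 [g2 [f1 [h2 [o2 c2]]]]]]]]].
rewrite c1 c2 in ce.
have Ha : (a.1 = 2 * X1 /\ a.2 = 2 * Y1) \/ (a.1 = 2 * X1 + d1 /\ a.2 = 2 * Y1 + d2).
  move: ain; rewrite e1 !inE => /orP [] /eqP ->; lia.
have Hb : (b.1 = 2 * X2 /\ b.2 = 2 * Y2) \/ (b.1 = 2 * X2 + g1 /\ b.2 = 2 * Y2 + g2).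
  move: bin; rewrite f1 !inE => /orP [] /eqP ->; lia.
case: (key h1 h2 ce Ha Hb ha hb) => eX [eY [ed1 ed2]].
apply: nef; rewrite e1 f1.
subst; exact: same_edge o1 o2.
Qed.


Lemma clique (T : choiceType) (W : {fset T}) (R : T -> T -> Prop) k (s : seq T) :
  uniq s -> {subset s <= W} ->
  (forall x y, x \in s -> y \in s -> x <> y -> R x y) ->
  colorable W R k -> (size s <= k)%N.
Proof.
move=> us sW hR [c [hc hinj]].
rewrite -(size_map c) -(size_iota 0 k); apply: uniq_leq_size.
  rewrite map_inj_in_uniq // => x y xs ys cxy.
  case: (eqVneq x y) => // /eqP nxy; exfalso.
  exact: (hinj x y (sW _ xs) (sW _ ys) nxy (hR x y xs ys nxy)).
by move=> z /mapP [x xs ->]; rewrite mem_iota add0n; exact: hc (sW _ xs).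
Qed.

Definition clos V E (e : {fset vtx}) (u : vtx) :=
  exists i j, e = [fset i; j] /\ u \in ([fset i; j] `|` edge_nbr V E i j).

Lemma clos_int V E e f u : clos V E e u -> clos V E f u -> interfere V E e f.
Proof.
move=> [i [j [-> hi]]] [k [l [-> hk]]]; exists i, j, k, l; split => //; split => //.
by apply/fset0Pn; exists u; rewrite in_fsetI hi hk.
Qed.

Lemma clos_in V E u m : clos V E [fset u; m] u.
Proof. by exists u, m; split => //; rewrite in_fsetU !inE eqxx. Qed.

Lemma clos_out V E u m m' : u \in V -> [fset u; m] \in E -> u != m' ->
  clos V E [fset m; m'] u.
Proof.
move=> uV hE nu; exists m, m'; split => //.
apply/fsetUP; right; apply/fsetUP; left.
by rewrite in_fsetD /nbr !inE nu uV hE.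
Qed.

Lemma fset_neq (x : vtx) (A B : {fset vtx}) : x \in A -> x \notin B -> A != B.
Proof. by move=> xA xB; apply/eqP => eAB; move: xB; rewrite -eAB xA. Qed.

Lemma pne (a1 a2 b1 b2 : int) : a1 <> b1 \/ a2 <> b2 -> ((a1, a2) == (b1, b2)) = false.
Proof. by move=> h; apply/eqP; case=> e1 e2; case: h. Qed.

Ltac neq1 x := apply: (@fset_neq x); [by rewrite !inE eqxx ?orbT | rewrite !inE !pne //; lia ].

Lemma in6 (T : eqType) (P : T -> Prop) (x a1 a2 a3 a4 a5 a6 : T) :
  P a1 -> P a2 -> P a3 -> P a4 -> P a5 -> P a6 ->
  x \in [:: a1; a2; a3; a4; a5; a6] -> P x.
Proof.
move=> p1 p2 p3 p4 p5 p6; rewrite !inE.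
by move=> /orP[/eqP->//|/orP[/eqP->//|/orP[/eqP->//|/orP[/eqP->//|/orP[/eqP->//|/eqP->//]]]]].
Qed.

Lemma lower6 V E (a b s : int) : finite_subgraph V E -> (s = 1 \/ s = -1) ->
  [fset (2*a, 2*b); (2*a+1, 2*b)] \in E ->
  [fset (2*a+1, 2*b); (2*a+2, 2*b)] \in E ->
  [fset (2*a, 2*b); (2*a-1, 2*b)] \in E ->
  [fset (2*a-1, 2*b); (2*a-2, 2*b)] \in E ->
  [fset (2*a, 2*b); (2*a, 2*b+s)] \in E ->
  [fset (2*a, 2*b+s); (2*a, 2*b+2*s)] \in E ->
  forall k, colorable E (interfere V E) k -> (6 <= k)%N.
Proof.
move=> [_ hE] hs h1 h2 h3 h4 h5 h6 k hk.
have uV : (2*a, 2*b) \in V.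
  case: (hE _ h1) => [i [j [eq [iV [jV _]]]]].
  have := congr1 (fun A => (2*a, 2*b) \in A) eq; rewrite !inE eqxx /=.
  by move=> /esym /orP [] /eqP ->.
set s6 := [:: [fset (2*a, 2*b); (2*a+1, 2*b)]; [fset (2*a+1, 2*b); (2*a+2, 2*b)];
  [fset (2*a, 2*b); (2*a-1, 2*b)]; [fset (2*a-1, 2*b); (2*a-2, 2*b)];
  [fset (2*a, 2*b); (2*a, 2*b+s)]; [fset (2*a, 2*b+s); (2*a, 2*b+2*s)]].
have -> : 6%N = size s6 by [].
apply: (clique _ _ _ hk).
- rewrite /s6 /= !inE !negb_or.
  repeat (apply/andP; split); try done;
  first [ neq1 (2*a, 2*b) | neq1 (2*a+1, 2*b) | neq1 (2*a-1, 2*b) | neq1 (2*a, 2*b+s)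
        | neq1 (2*a+2, 2*b) | neq1 (2*a-2, 2*b) ].
- by move=> x; rewrite /s6; apply: (@in6 _ (fun y => y \in E)).
- have hc : forall x, x \in s6 -> clos V E x (2*a, 2*b).
    move=> x; rewrite /s6; apply: (@in6 _ (fun y => clos V E y (2*a, 2*b))); try exact: clos_in;
    apply: clos_out => //; rewrite pne //; lia.
  by move=> x y xs ys _; apply: clos_int (hc _ xs) (hc _ ys).
Qed.


Lemma ce x y (p1 p2 q1 q2 : int) :
  cell_vertex x y (p1, p2) /\ cell_vertex x y (q1, q2) /\ `|p1 - q1| + `|p2 - q2| = 1 ->
  cell_edge x y [fset (p1, p2); (q1, q2)].
Proof. by move=> [h1 [h2 h3]]; exists (p1, p2), (q1, q2). Qed.

Ltac mem hA hB := first [ apply: hA; apply: ce; rewrite /cell_vertex /=; lia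
                        | apply: hB; apply: ce; rewrite /cell_vertex /=; lia ].

Lemma caseH V E x y x2 y2 : finite_subgraph V E -> x2 = x + 2 -> y2 = y ->
  contains_cell E x y -> contains_cell E x2 y2 ->
  forall k, colorable E (interfere V E) k -> (6 <= k)%N.
Proof.
move=> hG e1 e2 hA hB; subst.
apply: (@lower6 V E (x+2) y 1) => //; [by left| mem hA hB ..].
Qed.

Lemma caseD1 V E x y x2 y2 : finite_subgraph V E -> x2 = x + 1 -> y2 = y + 1 ->
  contains_cell E x y -> contains_cell E x2 y2 ->
  forall k, colorable E (interfere V E) k -> (6 <= k)%N.
Proof.
move=> hG e1 e2 hA hB; subst.
apply: (@lower6 V E (x+2) (y+1) (-1)) => //; [by right| mem hA hB ..].
Qed.

Lemma caseD2 V E x y x2 y2 : finite_subgraph V E -> x2 = x - 1 -> y2 = y + 1 ->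
  contains_cell E x y -> contains_cell E x2 y2 ->
  forall k, colorable E (interfere V E) k -> (6 <= k)%N.
Proof.
move=> hG e1 e2 hA hB; subst.
apply: (@lower6 V E x (y+1) (-1)) => //; [by right| mem hA hB ..].
Qed.

Lemma cv_bounds x y (p : vtx) : cell_vertex x y p ->
  2 * x <= p.1 <= 2 * x + 4 /\ 2 * y <= p.2 <= 2 * y + 2.
Proof. by case=> h1 [h2 _]. Qed.

Lemma lower V E : finite_subgraph V E -> contains_two_connected_cells E ->
  forall k, colorable E (interfere V E) k -> (6 <= k)%N.
Proof.
move=> hG [x [y [x' [y' [[k1 f1] [[k2 f2] [nxy [[e [c1 c2]] [hA hB]]]]]]]]].
case: c1 => p [q [ep [vp _]]].
case: c2 => p' [q' [ep' [vp' [vq' _]]]].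
have vp2 : cell_vertex x' y' p.
  have := congr1 (fun A => p \in A) ep; rewrite ep' !inE eqxx /=.
  by move=> /orP [] /eqP ->.
have [b1 b2] := cv_bounds vp; have [b3 b4] := cv_bounds vp2.
have nxy' : x <> x' \/ y <> y'.
  case: (eqVneq x x') => [ex|nx]; last by left; apply/eqP.
  by right => ey; apply: nxy; rewrite ex ey.
have : (x' = x + 2 /\ y' = y) \/ (x = x' + 2 /\ y = y') \/
       (x' = x + 1 /\ y' = y + 1) \/ (x = x' + 1 /\ y = y' + 1) \/
       (x' = x - 1 /\ y' = y + 1) \/ (x = x' - 1 /\ y = y' + 1) by lia.
case=> [[h1 h2]|[[h1 h2]|[[h1 h2]|[[h1 h2]|[[h1 h2]|[h1 h2]]]]]].
- exact: caseH hG h1 h2 hA hB.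
- exact: caseH hG h1 h2 hB hA.
- exact: caseD1 hG h1 h2 hA hB.
- exact: caseD1 hG h1 h2 hB hA.
- exact: caseD2 hG h1 h2 hA hB.
- exact: caseD2 hG h1 h2 hB hA.
Qed.


Unset Implicit Arguments.
Local Close Scope ring_scope.

Theorem lemma1 (V : {fset vtx}) (E : {fset {fset vtx}}) :
  finite_subgraph V E ->
  contains_two_connected_cells E ->
  chromatic_number E (interfere V E) 6.
Proof.
move=> hG h2; split; first exact: upper hG.
exact: lower hG h2.
Qed.
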